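(* Let $n\ge 7$ with $3\nmid n$, $\zeta_n=e^{2\pi i/n}$, $K=\mathbb{Q}(\zeta_n)$, and let $J=\{0,1,3\}$ or $J=\{0,2,3\}$, written $J=\{j_1<j_2<j_3\}$. Let $G$ be the $3\times n$ matrix over $K$ with $G_{i,l}=\zeta_n^{j_i(l-1)}$ ($1\le i\le 3$, $1\le l\le n$). Let $P_{\mathrm{bad}}$ be the set of rational primes $p$ dividing $|N_{K/\mathbb{Q}}(\Delta)|$ for some non-zero determinant $\Delta$ of a $3\times 3$ submatrix of $G$. Let $p\notin P_{\mathrm{bad}}$ be a prime with $p\nmid n$, $\mathfrak{p}$ a prime ideal of $\mathbb{Z}[\zeta_n]$ lying above $p$, $\rho:\mathbb{Z}[\zeta_n]\to\mathbb{Z}[\zeta_n]/\mathfrak{p}\cong\mathbb{F}_{p^f}$ the reduction map ($f$ the multiplicative order of $p$ modulo $n$), and $\overline{G}=\rho(G)$. Then the code generated by $\overline{G}$ is a cyclic MDS code of length $n$ and dimension $3$ over $\mathbb{F}_{p^f}$ that is of non-RS type.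
   Context: A linear $[n,k]$ code is MDS if its minimum distance is $n-k+1$; cyclic means invariant under cyclic shift of coordinates. A code is of RS type if it is equivalent (change of generator matrix, column permutation, non-zero column scaling) to a generalized Reed–Solomon code with generator matrix $(v_j x_j^{i-1})$, $x_j$ distinct, $v_j\neq 0$; otherwise it is of non-RS type. $N_{K/\mathbb{Q}}$ is the field norm. *)

(* Defs.v *)
From HB Require Import structures.
From mathcomp Require Import all_boot all_order all_algebra all_fingroup all_field.
Set Implicit Arguments. Unset Strict Implicit. Unset Printing Implicit Defensive.
Import Order.TTheory GRing.Theory Num.Theory.
Local Open Scope ring_scope.

(* The code generated by C : 'M[F]_(k,n) is its row space; codewords are the    *)

Definition wt (F : fieldType) (n : nat) (x : 'rV[F]_n) : nat :=
  #|[set i : 'I_n | x 0 i != 0]|.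

Definition min_dist_is (F : fieldType) (k n : nat) (C : 'M[F]_(k, n)) (d : nat) : Prop :=
  (exists x : 'rV[F]_n, (x <= C)%MS /\ x != 0 /\ wt x = d) /\
  (forall x : 'rV[F]_n, (x <= C)%MS -> x != 0 -> (d <= wt x)%N).

Definition is_MDS (F : fieldType) (k n : nat) (C : 'M[F]_(k, n)) : Prop :=
  min_dist_is C (n - \rank C + 1).

Definition cshift (F : fieldType) (n : nat) (x : 'rV[F]_n) : 'rV[F]_n :=
  \row_(i < n) x 0 (ord_pred i).

Definition is_cyclic_code (F : fieldType) (k n : nat) (C : 'M[F]_(k, n)) : Prop :=
  forall x : 'rV[F]_n, (x <= C)%MS -> (cshift x <= C)%MS.

Definition GRSmx (F : fieldType) (k n : nat) (x v : 'I_n -> F) : 'M[F]_(k, n) :=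
  \matrix_(i < k, j < n) (v j * x j ^+ i).

Definition RS_type (F : fieldType) (k n : nat) (C : 'M[F]_(k, n)) : Prop :=
  exists (s : 'S_n) (a x v : 'I_n -> F),
    (forall j, a j != 0) /\ injective x /\ (forall j, v j != 0) /\
    (((\matrix_(i < k, j < n) (a j * C i (s j)))%R : 'M[F]_(k, n)) == GRSmx (\rank C) x v)%MS.

(* G_{i,l} = z^(j_i * l), rows i < 3, columns l < n (0-indexed, so l = l'-1). *)
Definition Gmat (R : pzRingType) (n : nat) (J : seq nat) (z : R) : 'M[R]_(3, n) :=
  \matrix_(i < 3, l < n) z ^+ (nth 0%N J i * l).

Definition minorG (R : comPzRingType) (n : nat) (J : seq nat) (z : R)
  (c : 'I_3 -> 'I_n) : R := \det (colsub c (Gmat n J z)).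

(* Field norm N_{K/Q} of the minor, K = Q(z), z a primitive n-th root of unity:
   the product of its Galois conjugates sigma_k (z |-> z^k, k coprime to n). *)
Definition normMinor (n : nat) (J : seq nat) (z : algC) (c : 'I_3 -> 'I_n) : algC :=
  \prod_(k < n | coprime k n) minorG J (z ^+ k) c.

Definition P_bad (n : nat) (J : seq nat) (z : algC) (p : nat) : Prop :=
  exists c : 'I_3 -> 'I_n, minorG J z c != 0 /\
    exists m : int, normMinor J z c = m%:~R /\ (p %| absz m)%N.

(* Main.v *)
Require Import Defs.
From HB Require Import structures.
From mathcomp Require Import all_boot all_order all_algebra all_fingroup all_field.
From mathcomp Require Import ring zify.
Import Order.TTheory GRing.Theory Num.Theory.
Set Implicit Arguments. Unset Strict Implicit. Unset Printing Implicit Defensive.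
Local Open Scope ring_scope.



Lemma det3 (R : comPzRingType) (A : 'M[R]_3) : \det A =
  A 0 0 * (A 1 1 * A 2 2 - A 1 2 * A 2 1) - A 0 1 * (A 1 0 * A 2 2 - A 1 2 * A 2 0)
  + A 0 2 * (A 1 0 * A 2 1 - A 1 1 * A 2 0).
Proof.
rewrite (expand_det_row _ 0) !big_ord_recl big_ord0 /cofactor.
rewrite !(expand_det_row _ 0) !big_ord_recl !big_ord0 /cofactor.
rewrite !det_mx11 !mxE /=.
pose f := fun i j : nat => A (inord i) (inord j).
have hA : forall i j, A i j = f i j by move=> i j; rewrite /f !inord_val.
rewrite !hA /= /bump /=.
rewrite !expr0 !expr1. ring.
Qed.

Definition sJ (R : pzRingType) (J : seq nat) (a b d : R) :=
  if J == [:: 0; 1; 3]%N then a + b + d else a * b + b * d + d * a.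

Lemma minor_eq (R : comPzRingType) n J (x : R) (c : 'I_3 -> 'I_n) :
  (J = [:: 0; 1; 3]%N \/ J = [:: 0; 2; 3]%N) ->
  minorG J x c = (x ^+ c 1 - x ^+ c 0) * (x ^+ c 2 - x ^+ c 0) * (x ^+ c 2 - x ^+ c 1)
     * sJ J (x ^+ c 0) (x ^+ c 1) (x ^+ c 2).
Proof.
move=> HJ; rewrite /minorG det3 !mxE /sJ.
case: HJ => -> /=; rewrite !mul0n ?mul1n !expr0 ?(mulnC 2%N) ?(mulnC 3%N) ?(mulnC 1%N) !exprM ?expr1; ring.
Qed.

Lemma minorG_rmorph (R S : comNzRingType) (f : {rmorphism R -> S}) n J (X : R)
  (c : 'I_3 -> 'I_n) : f (minorG J X c) = minorG J (f X) c.
Proof.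
rewrite /minorG -det_map_mx; congr (\det _); apply/matrixP => i j.
by rewrite !mxE rmorphXn.
Qed.

Lemma root_unit_conj (a : algC) n : (0 < n)%N -> a ^+ n = 1 -> a^* = a^-1.
Proof.
move=> n0 an; have : `|a| == 1.
  by rewrite -(pexpr_eq1 n0) // -normrX an normr1.
by move/eqP => na; rewrite invC_norm na expr1n invr1 mul1r.
Qed.

Lemma root_unit_neq0 (R : nzRingType) (a : R) n : (0 < n)%N -> a ^+ n = 1 -> a != 0.
Proof.
move=> n0 an; apply/eqP => a0; move: an; rewrite a0 expr0n.
by case: n n0 => // n _ /= /eqP; rewrite eq_sym oner_eq0.
Qed.

Lemma cube_eq (a b : algC) n : ~~ (3 %| n)%N -> a ^+ n = 1 -> b ^+ n = 1 ->
  a ^+ 3 = b ^+ 3 -> a = b.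
Proof.
move=> n3 an bn ab.
have n0 : (0 < n)%N by case: n n3 {an bn}.
have b0 := root_unit_neq0 n0 bn.
pose u := a / b.
have u3 : u ^+ 3 = 1 by rewrite /u exprMn ab exprVn divff // expf_neq0.
have un : u ^+ n = 1 by rewrite /u exprMn an exprVn bn invr1 mulr1.
have : u = 1.
  have := expr_mod n u3; rewrite un.
  have : (n %% 3 = 1)%N \/ (n %% 3 = 2)%N.
    move: n3; rewrite /dvdn; have := ltn_pmod n (isT : (0 < 3)%N).
    by case: (n %% 3)%N => [|[|[|]]] //; auto.
  case=> -> //=.
  by move=> u2; rewrite -[RHS]u3 exprS u2 mulr1.
by move=> u1; rewrite -[a](divfK b0) -/u u1 mul1r.
Qed.



Section Sum3.
Variables (n : nat) (a b d : algC).
Hypotheses (n3 : ~~ (3 %| n)%N) (an : a ^+ n = 1) (bn : b ^+ n = 1) (dn : d ^+ n = 1).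
Let n0 : (0 < n)%N. Proof. by move: n3; case: (n). Qed.
Let a0 := root_unit_neq0 n0 an.
Let b0 := root_unit_neq0 n0 bn.
Let d0 := root_unit_neq0 n0 dn.

Lemma e12_false : a + b + d = 0 -> a * b + b * d + d * a = 0 -> False.
Proof.
move=> e1 e2.
have c3 : forall x, x = a \/ x = b \/ x = d -> x ^+ 3 = a * b * d.
  move=> x hx; apply/eqP; rewrite -subr_eq0.
  have -> : x ^+ 3 - a * b * d = x ^+ 2 * (a + b + d) - x * (a * b + b * d + d * a)
     + (x - a) * (x - b) * (x - d) by ring.
  rewrite e1 e2 !mulr0 subrr add0r; case: hx => [->|[->|->]]; rewrite !subrr ?mulr0 ?mul0r //.
have ab : a = b by apply: (cube_eq n3 an bn); rewrite !c3; auto.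
have ad : a = d by apply: (cube_eq n3 an dn); rewrite !c3; auto.
move: e1; rewrite -ab -ad => /eqP; have -> : a + a + a = 3%:R * a by ring.
by rewrite mulf_eq0 (negbTE a0) pnatr_eq0 //.
Qed.

Lemma conj_e1 : (a + b + d)^* = (a * b + b * d + d * a) / (a * b * d).
Proof.
rewrite !rmorphD /= !(root_unit_conj n0) //; field.
by rewrite a0 b0 d0.
Qed.

Lemma conj_e2 : (a * b + b * d + d * a)^* = (a + b + d) / (a * b * d).
Proof.
rewrite !rmorphD !rmorphM /= !(root_unit_conj n0) //; field.
by rewrite a0 b0 d0.
Qed.

Lemma e1_neq0 : a + b + d != 0.
Proof.
apply/eqP => e1; apply: e12_false => //.
have := conj_e1; rewrite e1 rmorph0 => /esym /eqP.
by rewrite mulf_eq0 invr_eq0 !mulf_eq0 (negbTE a0) (negbTE b0) (negbTE d0) !orbF => /eqP.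
Qed.

Lemma e2_neq0 : a * b + b * d + d * a != 0.
Proof.
apply/eqP => e2; apply: e12_false => //.
have := conj_e2; rewrite e2 rmorph0 => /esym /eqP.
by rewrite mulf_eq0 invr_eq0 !mulf_eq0 (negbTE a0) (negbTE b0) (negbTE d0) !orbF => /eqP.
Qed.
End Sum3.

Lemma minor_algC_neq0 n J (z : algC) (c : 'I_3 -> 'I_n) :
  (J = [:: 0; 1; 3]%N \/ J = [:: 0; 2; 3]%N) -> ~~ (3 %| n)%N ->
  n.-primitive_root z -> injective c -> minorG J z c != 0.
Proof.
move=> HJ n3 pz ic; rewrite (minor_eq _ _ HJ).
have zn : forall k, (z ^+ k) ^+ n = 1.
  by move=> k; rewrite exprAC (prim_expr_order pz) expr1n.
have dif : forall i j : 'I_3, i != j -> z ^+ c i != z ^+ c j.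
  move=> i j ij; rewrite (eq_prim_root_expr pz) !modn_small //.
  by apply: contra ij => /eqP /val_inj /ic ->.
rewrite !mulf_neq0 ?subr_eq0 ?dif //.

rewrite /sJ; case: ifP => _; [exact: (e1_neq0 n3 (zn _) (zn _) (zn _)) | exact: (e2_neq0 n3 (zn _) (zn _) (zn _))].
Qed.



Definition ev (R : comNzRingType) (x : R) : {rmorphism {poly int} -> R} :=
  horner_eval x \o map_poly intr.

Lemma evE (R : comNzRingType) (x : R) q : ev x q = (map_poly intr q).[x].
Proof. by []. Qed.

Definition Qp n J (c : 'I_3 -> 'I_n) : {poly int} :=
  \prod_(k < n | coprime k n) minorG J ('X ^+ k : {poly int}) c.

Lemma evQ (R : comNzRingType) (x : R) n J (c : 'I_3 -> 'I_n) :
  ev x (Qp J c) = \prod_(k < n | coprime k n) minorG J (x ^+ k) c.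
Proof.
rewrite rmorph_prod; apply: eq_bigr => k _.
by rewrite minorG_rmorph rmorphXn evE map_polyX hornerX.
Qed.

Lemma evQz n J (z : algC) (c : 'I_3 -> 'I_n) (k' : 'I_n) :
  n.-primitive_root z -> coprime k' n ->
  ev (z ^+ k') (Qp J c) = normMinor J z c.
Proof.
move=> pz co; rewrite evQ /normMinor.
have n_gt0 := prim_order_gt0 pz.
pose f e (k : 'I_n) := Ordinal (ltn_pmod (k * e) n_gt0).
have injf: injective (f k').
  apply: can_inj (f (egcdn k' n).1) _ => k; apply: val_inj => /=.
  rewrite modnMml -mulnA -modnMmr -{1}(mul1n k').
  by rewrite (chinese_modr co 0) modnMmr muln1 modn_small.
rewrite [RHS](reindex_inj injf); apply: eq_big => k /=.
  by rewrite coprime_modl coprimeMl co andbT.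
by move=> _; rewrite (prim_expr_mod pz) mulnC exprM.
Qed.

Lemma intr_eq0_pchar (F : fieldType) p (m : int) :
  p \in [pchar F] -> m%:~R = 0 :> F -> (p %| absz m)%N.
Proof.
move=> pF; case: m => k /=.
  by move=> h; rewrite (dvdn_pcharf pF); apply/eqP.
rewrite NegzE mulrNz => /eqP; rewrite oppr_eq0 => /eqP h.
by rewrite (dvdn_pcharf pF); apply/eqP.
Qed.

Lemma minorF_neq0 n J (z : algC) p (F : fieldType) (w : F) (c : 'I_3 -> 'I_n) :
  (1 < n)%N -> (J = [:: 0; 1; 3]%N \/ J = [:: 0; 2; 3]%N) -> ~~ (3 %| n)%N ->
  n.-primitive_root z -> ~ P_bad n J z p -> p \in [pchar F] ->
  root (map_poly intr 'Phi_n) w -> injective c -> minorG J w c != 0.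
Proof.
move=> n1 HJ n3 pz nP pF rw ic.
have n_gt0 : (0 < n)%N by apply: ltn_trans n1.
have mon := Cyclotomic_monic n.
set Phi := 'Phi_n.
set Qc := Qp J c.
set Rm := Qc %% Phi.
have dq : Qc = Qc %/ Phi * Phi + Rm := Pdiv.IdomainMonic.divp_eq mon Qc.
have evPhi : forall k' : 'I_n, coprime k' n -> ev (z ^+ k') Phi = 0.
  move=> k' co; rewrite evE (Cintr_Cyclotomic pz); apply/eqP.
  by rewrite -/(root _ _) (root_cyclotomic pz) (prim_root_exp_coprime _ pz).
set N := normMinor J z c.
have evR : forall k' : 'I_n, coprime k' n -> ev (z ^+ k') Rm = N.
  move=> k' co; rewrite /N -(evQz J c pz co) -/Qc [in RHS]dq rmorphD rmorphM.
  by rewrite evPhi // mulr0 add0r.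
have RmC : map_poly intr Rm = N%:P :> {poly algC}.
  apply/eqP; rewrite -subr_eq0; apply/eqP.
  pose rs := image (fun k : 'I_n => z ^+ k) [pred k : 'I_n | coprime k n].
  apply: (@roots_geq_poly_eq0 _ _ rs).
  - apply/allP => x /imageP [k kco ->].
    by rewrite /root hornerD hornerN hornerC -evE evR // subrr.
  - rewrite map_inj_uniq ?enum_uniq // => i j /eqP.
    by rewrite (eq_prim_root_expr pz) !modn_small // => /eqP /val_inj.
  - have sz : size rs = totient n.
      apply/eqP; rewrite -eqSS -(size_prod_XsubC _ id) big_image.
      by rewrite -(size_cyclotomic z n).
    rewrite sz; apply: leq_trans (size_polyD _ _) _.
    rewrite size_polyN geq_max; apply/andP; split.
      rewrite size_map_inj_poly //; last exact: intr_inj.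
      by rewrite -ltnS -(size_Cyclotomic n) ltn_modp monic_neq0.
    by apply: leq_trans (size_polyC_leq1 _) _; rewrite totient_gt0.
set m := Rm`_0.
have Nm : N = m%:~R by have := congr1 (fun q : {poly algC} => q`_0) RmC; rewrite coef_map coefC /=.
have Rmm : Rm = m%:P.
  apply: (@map_inj_poly _ _ (intr : int -> algC)); first exact: intr_inj.
    by rewrite rmorph0.
  by rewrite map_polyC RmC Nm.
apply/eqP => w0.
have evQw : ev w Qc = 0.
  rewrite evQ (bigD1 (Ordinal n1)) /=; last exact: coprime1n.
  by rewrite expr1 w0 mul0r.
have evPw : ev w Phi = 0 by apply/eqP; rewrite evE.
have : ev w Rm = 0.
  by move: evQw; rewrite dq rmorphD rmorphM evPw mulr0 add0r.
rewrite Rmm evE map_polyC hornerC => /(intr_eq0_pchar pF) pm.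
apply: nP; exists c; split; first exact: minor_algC_neq0.
by exists m; split.
Qed.



Lemma wn_eq1 (F : fieldType) (w : F) n : (0 < n)%N ->
  root (map_poly intr 'Phi_n) w -> w ^+ n = 1.
Proof.
move=> n0 rw; have := congr1 (ev w) (prod_Cyclotomic n0).
rewrite rmorphB rmorph1 rmorphXn [ev w 'X]evE map_polyX hornerX rmorph_prod.
rewrite (big_rem n) /=; last by rewrite -dvdn_divisors.
have -> : horner_eval w (map_poly intr (Cyclotomic n)) = 0 by apply/eqP.
by rewrite mul0r => /esym /eqP; rewrite subr_eq0 => /eqP.
Qed.

Definition mk3 n (a b d : 'I_n) : 'I_3 -> 'I_n :=
  fun i => match val i with 0 => a | 1 => b | _ => d end.

Lemma mk3_inj n (a b d : 'I_n) : a != b -> a != d -> b != d -> injective (mk3 a b d).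
Proof.
move=> ab ad bd [[|[|[|i]]] hi] [[|[|[|j]]] hj] //= E; try (by apply: val_inj);
  rewrite /mk3 /= in E; rewrite ?E ?eqxx in ab ad bd; by [].
Qed.

Section Main.
Variables (F : fieldType) (w : F) (n : nat) (J : seq nat).
Hypothesis n7 : (7 <= n)%N.
Hypothesis HJ : J = [:: 0; 1; 3]%N \/ J = [:: 0; 2; 3]%N.
Hypothesis wn : w ^+ n = 1.
Hypothesis Hm : forall c : 'I_3 -> 'I_n, injective c -> minorG J w c != 0.

Let n0 : (0 < n)%N. Proof. exact: leq_trans n7. Qed.
Let w0 : w != 0. Proof. exact: root_unit_neq0 n0 wn. Qed.

Lemma wk_neq1 k : (0 < k < n)%N -> w ^+ k != 1.
Proof.
case/andP => k0 kn.
pose k' := if k == 1%N then 2%N else 1%N.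
have k'n : (k' < n)%N by rewrite /k'; case: ifP => _; apply: leq_trans n7.
pose c := mk3 (Ordinal n0) (Ordinal kn) (Ordinal k'n).
have ic : injective c.
  apply: mk3_inj; rewrite -val_eqE /= ?/k'.
  - by rewrite eq_sym -lt0n.
  - by case: ifP.
  - by case: (k =P 1%N) => [->|/eqP].
have := Hm ic; rewrite (minor_eq _ _ HJ) /c /mk3 /= expr0.
by apply: contra => /eqP ->; rewrite subrr !mul0r.
Qed.

Let G := Gmat n J w.

Lemma G_unit (c : 'I_3 -> 'I_n) : injective c -> colsub c G \in unitmx.
Proof. by move=> ic; rewrite unitmxE unitfE; exact: Hm. Qed.

Lemma G_kill (c : 'I_3 -> 'I_n) (v : 'rV[F]_3) : injective c ->
  (forall j, (v *m G) 0 (c j) = 0) -> v = 0.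
Proof.
move=> ic h.
have e : v *m colsub c G = 0.
  by rewrite mulmx_colsub; apply/matrixP => i j; rewrite (ord1 i) mxE h mxE.
by rewrite -(mulmxK (G_unit ic) v) e mul0mx.
Qed.


Let o (k : nat) (hk : (k < 7)%N) : 'I_n := Ordinal (leq_trans hk n7).
Let o0 := o (isT : (0 < 7)%N).
Let o1 := o (isT : (1 < 7)%N).
Let o2 := o (isT : (2 < 7)%N).
Let c012 := mk3 o0 o1 o2.
Let ic012 : injective c012. Proof. by apply: mk3_inj. Qed.

Lemma colsubE m k (c : 'I_k -> 'I_n) (A : 'M[F]_(m, n)) :
  colsub c A = A *m colsub c 1%:M.
Proof. by rewrite mulmx_colsub mulmx1. Qed.

Lemma rankG : \rank G = 3%N.
Proof.
apply/eqP; rewrite eqn_leq rank_leq_row /=.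
rewrite -{1}(mxrank_unit (G_unit ic012)) colsubE; exact: mxrankM_maxl.
Qed.

Lemma MDS_G : is_MDS G.
Proof.
rewrite /is_MDS rankG.
have -> : (n - 3 + 1 = n - 2)%N by lia.
split.
  pose B := colsub c012 G.
  pose v := (delta_mx 0 2 : 'rV[F]_3) *m invmx B.
  have [x xE] : {x | x = v *m G} by exists (v *m G).
  have hx : forall j, x 0 (c012 j) = (delta_mx 0 2 : 'rV[F]_3) 0 j.
    move=> j; have : colsub c012 x = delta_mx 0 2.
      by rewrite xE -mulmx_colsub mulmxKV // G_unit.
    by move/matrixP => /(_ 0 j); rewrite mxE.
  have x2 : x 0 o2 = 1 by have := hx 2; rewrite mxE /= => ->.
  have S : [set i | x 0 i != 0] = ~: [set o0; o1].
    apply/setP => i; rewrite !inE.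
    case: (i =P o0) => [->|/eqP i0].
      by have := hx 0; rewrite mxE /= => ->; rewrite eqxx.
    case: (i =P o1) => [->|/eqP i1].
      by have := hx 1; rewrite mxE /= => ->; rewrite eqxx.
    apply/eqP => xi.
    have : v = 0.
      apply: (@G_kill (mk3 o0 o1 i)).
        by apply: mk3_inj => //; rewrite eq_sym.
      move=> [[|[|[|j]]] hj] //=; rewrite -xE /mk3 /= ?xi //; [have := hx 0 | have := hx 1]; rewrite mxE /=; exact.
    by move=> v0; move: x2; rewrite xE v0 mul0mx mxE => /eqP; rewrite eq_sym oner_eq0.
  exists x; split; first by rewrite xE submxMl.
  split; first by apply/eqP => /matrixP /(_ 0 o2); rewrite x2 mxE => /eqP; rewrite oner_eq0.
  rewrite /wt S; have := cardsC [set o0; o1]; rewrite cards2 card_ord /=.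
  by lia.
move=> x /submxP [v ->] xn0; rewrite leqNgt; apply/negP => lt.
pose Z := [set i | (v *m G) 0 i == 0].
have SZ : [set i | (v *m G) 0 i != 0] = ~: Z by apply/setP => i; rewrite !inE.
have H3 : (3 <= #|Z|)%N.
  move: lt; rewrite /wt SZ; have := cardsC Z; rewrite card_ord; lia.
pose c := fun j : 'I_3 => enum_val (widen_ord H3 j).
have ic : injective c.
  by move=> i j /enum_val_inj /(congr1 val) /= /val_inj.
have : v = 0.
  apply: (G_kill ic) => j.
  by have := enum_valP (widen_ord H3 j); rewrite inE => /eqP.
by move=> v0; move: xn0; rewrite v0 mul0mx eqxx.
Qed.

Lemma cyclic_G : is_cyclic_code G.
Proof.
move=> x /submxP [v ->]; apply/submxP.
exists (\row_i (v 0 i * w ^+ (nth 0%N J i * (n - 1)))).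
apply/matrixP => i l; rewrite (ord1 i) /cshift !mxE.
apply: eq_bigr => k _; rewrite !mxE -mulrA -exprD; congr (_ * _).
set a := nth 0%N J k.
rewrite -(expr_mod (a * ord_pred l)%N wn) -(expr_mod (a * (n - 1) + a * l)%N wn).
congr (_ ^+ _).
rewrite /= modnMmr -mulnDr; congr (_ * _ %% _)%N; lia.
Qed.


Lemma schur_sub (x v : 'I_n -> F) (u u' : 'rV[F]_n) :
  (u <= GRSmx 3 x v)%MS -> (u' <= GRSmx 3 x v)%MS ->
  ((\row_j (u 0 j * u' 0 j))%R <= ((\matrix_(e < 5, j < n) (v j ^+ 2 * x j ^+ e))%R : 'M[F]_(5, n)))%MS.
Proof.
move=> /submxP [r ->] /submxP [r' ->].
set H := (\matrix_(e < 5, j < n) _ : 'M[F]_(5, n)).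
have -> : \row_j ((r *m GRSmx 3 x v) 0 j * (r' *m GRSmx 3 x v) 0 j) =
   \sum_(m < 3) \sum_(m' < 3) (r 0 m * r' 0 m') *: row (inord (m + m')) H.
  apply/matrixP => i j; rewrite (ord1 i) !mxE summxE big_distrlr /=.
  apply: eq_bigr => m _; rewrite summxE; apply: eq_bigr => m' _.
  rewrite !mxE inordK; last by have := ltn_ord m; have := ltn_ord m'; lia.
  rewrite exprD; ring.
apply: summx_sub => m _; apply: summx_sub => m' _.
by apply: scalemx_sub; exact: row_sub.
Qed.

Lemma w_inj a b : (a < n)%N -> (b < n)%N -> a != b -> w ^+ a != w ^+ b.
Proof.
wlog ab : a b / (a < b)%N.
  move=> hw an bn; rewrite neq_ltn => /orP [ab|ba].
    by apply: hw => //; rewrite neq_ltn ab.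
  by rewrite eq_sym; apply: hw => //; rewrite neq_ltn ba.
move=> an bn _; rewrite -(subnKC (ltnW ab)) exprD.
apply/negP => /eqP h.
have : w ^+ (b - a) = 1.
  apply: (mulfI (expf_neq0 a w0)); rewrite mulr1; exact/esym.
apply/eqP; apply: wk_neq1; rewrite subn_gt0 ab /=.
by apply: leq_ltn_trans (leq_subr _ _) bn.
Qed.

Lemma nonRS_G : ~ RS_type G.
Proof.
move=> [s [a [x [v [a0 [_ [_ eq]]]]]]]; rewrite rankG in eq.
case/andP: eq => sub _.
set C' := (\matrix_(i < 3, j < n) (a j * G i (s j)) : 'M[F]_(3, n)) in sub.
pose e1 (q : 'I_6) : 'I_3 := nth 0 [:: 0; 0; 0; 1; 1; 2] q.
pose e2 (q : 'I_6) : 'I_3 := nth 0 [:: 0; 1; 2; 1; 2; 2] q.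
pose U := (\matrix_(q < 6, j < n) (C' (e1 q) j * C' (e2 q) j) : 'M[F]_(6, n)).
pose H := (\matrix_(e < 5, j < n) (v j ^+ 2 * x j ^+ e) : 'M[F]_(5, n)).
have UH : (U <= H)%MS.
  apply/row_subP => q.
  have -> : row q U = \row_j (row (e1 q) C' 0 j * row (e2 q) C' 0 j).
    by apply/rowP => j; rewrite !mxE.
  by apply: schur_sub; apply: submx_trans (row_sub _ _) sub.
have rU : (\rank U <= 5)%N by apply: leq_trans (mxrankS UH) (rank_leq_row _).
pose E (q : 'I_6) := (nth 0 J (e1 q) + nth 0 J (e2 q))%N.
have Einj : forall i j : 'I_6, i != j -> E i != E j.
  by case: HJ => HJ'; rewrite /E HJ' /e1 /e2;
    move=> [[|[|[|[|[|[|i]]]]]] hi] [[|[|[|[|[|[|j]]]]]] hj].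
have Elt : forall i : 'I_6, (E i < n)%N.
  move=> i; apply: leq_trans n7; move: i.
  by case: HJ => HJ'; rewrite /E HJ' /e1 /e2; move=> [[|[|[|[|[|[|i]]]]]] hi].
have n6 : (6 <= n)%N by apply: leq_trans n7.
pose g (l : 'I_6) : 'I_n := (s^-1)%g (widen_ord n6 l).
pose b := \row_(q < 6) w ^+ E q.
pose d := \row_(l < 6) a (g l) ^+ 2.
have Ug : colsub g U = (Vandermonde 6 b)^T *m diag_mx d.
  apply/matrixP => q l; rewrite mul_mx_diag !mxE /g permKV /=.
  rewrite -!exprM /E mulnDl exprD; ring.
have detU : \det (colsub g U) != 0.
  rewrite Ug det_mulmx det_tr det_Vandermonde det_diag.
  apply: mulf_neq0; apply/prodf_neq0 => i _.
    apply/prodf_neq0 => j ij; rewrite !mxE subr_eq0 eq_sym.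
    by apply: w_inj => //; apply: Einj; rewrite neq_ltn ij.
  by rewrite mxE expf_neq0.
have : (6 <= \rank U)%N.
  rewrite -{1}(mxrank_unit (A := colsub g U)); last by rewrite unitmxE unitfE.
  rewrite colsubE; exact: mxrankM_maxl.
by move=> h; have := leq_trans h rU.
Qed.

End Main.

Theorem mainTheorem6 (n : nat) (J : seq nat) (z : algC) (p : nat)
    (F : finFieldType) (w : F) :
  (7 <= n)%N -> ~~ (3 %| n)%N ->
  (J = [:: 0; 1; 3]%N \/ J = [:: 0; 2; 3]%N) ->
  n.-primitive_root z ->
  prime p -> ~ P_bad n J z p -> ~~ (p %| n)%N ->
  (* reduction rho : Z[z] -> F = Z[z]/pp, a surjective ring morphism with
     p in its kernel; rho(z) = w *)
  p \in [pchar F] ->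
  root (map_poly intr 'Phi_n) w ->
  (forall y : F, exists q : {poly int}, y = (map_poly intr q).[w]) ->
  is_cyclic_code (Gmat n J w) /\ \rank (Gmat n J w) = 3%N /\
  is_MDS (Gmat n J w) /\ ~ RS_type (Gmat n J w).
Proof.
move=> n7 n3 HJ pz pp nP np pF rw _.
have n1 : (1 < n)%N by apply: leq_trans n7.
have n0 : (0 < n)%N by apply: leq_trans n7.
have wn := wn_eq1 n0 rw.
have Hm : forall c : 'I_3 -> 'I_n, injective c -> minorG J w c != 0.
  by move=> c ic; apply: (minorF_neq0 n1 HJ n3 pz nP pF rw ic).
split; first by eapply cyclic_G; eauto.
split; first by eapply rankG; eauto.
split; first by eapply MDS_G; eauto.
by eapply nonRS_G; eauto.
Qed.
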